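(* Let $L>0$, $\theta_1>0$, $\theta_2>0$, $0\le \epsilon<1$, $\omega\ge 0$, and let $c(t)=\theta_1(1+\epsilon\cos(\omega t))$. Fix a setpoint $x^*\in(0,L)$ and a constant $v_{\max}$ with $v(x^* )<v_{\max}<1$, where $v(x^* )=\frac{\theta_2x^*}{1+\theta_2x^*}$. Let $S(x^* )\in\mathbb{R}$ satisfy $S(x^* )\ge S_{\min}(x^* )$, where $$S_{\min}(x^* )=\frac{x^*}{\frac{1}{\theta_2x^*}+1}\max\left\{\frac{v_{\max}\left(1+\frac{1}{\theta_2x^*}\right)-1}{x^*};\ \frac{1}{L-x^*}\right\},$$ and let $a_{\rm l}(x^* )>0$ and $a_{\rm r}(x^* )>0$ be solutions of $$a_{\rm l}(x^* )(v_{\max}-v(x^* ))-S(x^* )\big(1-e^{-a_{\rm l}(x^* )x^*}\big)=0,\qquad a_{\rm r}(x^* )v(x^* )-S(x^* )\big(1-e^{-a_{\rm r}(x^* )(L-x^* )}\big)=0.$$ Consider the delay-free system $$\dot x(t)=c(t)\left[-\frac{\theta_2x(t)}{(1+\theta_2x(t))(1-U(t))}+\frac{U(t)}{1-U(t)}\right]$$ in closed loop with the feedback $U(t)=v(x(t),x^* )$ (defined in the context), with initial condition $x(0)=x_0\in[0,L)$. Then the closed-loop system is globally exponentially stable at $x=x^*$ on the physical domain: for every $x_0\in[0,L)$ the solution exists for all $t\ge0$, stays in $[0,L]$, and there exist constants $k,\lambda>0$ (independent of $x_0$) such that $|x(t)-x^*|\le k e^{-\lambda t}|x_0-x^*|$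 for all $t\ge 0$.
   Context: The feedback is the piecewise exponential (''Bang-Bang-like'') law $v(x,x^* )=v_{\rm l}(x,x^* )$ for $x\le x^*$ and $v(x,x^* )=v_{\rm r}(x,x^* )$ for $x> x^*$, where $$v_{\rm l}(x,x^* )=v(x^* )+(v_{\max}-v(x^* ))\frac{1-e^{a_{\rm l}(x^* )(x-x^* )}}{1-e^{-a_{\rm l}(x^* )x^*}},\qquad v_{\rm r}(x,x^* )=v(x^* )-v(x^* )\frac{1-e^{-a_{\rm r}(x^* )(x-x^* )}}{1-e^{-a_{\rm r}(x^* )(L-x^* )}},$$ with $v(x^* )=\theta_2x^*/(1+\theta_2x^* )$. Here $x(t)$ is the length of the fully filled zone of a screw extruder, $U$ is the inlet filling ratio, $v_{\max}<1$ is the maximal inlet filling ratio. *)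

(* Defs.v *)
From Stdlib Require Import Reals Lra.
Open Scope R_scope.

Definition vstar (th2 xs : R) : R := th2 * xs / (1 + th2 * xs).

Definition Smin (L th2 vmax xs : R) : R :=
  xs / (/ (th2 * xs) + 1) *
  Rmax ((vmax * (1 + / (th2 * xs)) - 1) / xs) (1 / (L - xs)).

Definition v_left (th2 vmax al xs x : R) : R :=
  vstar th2 xs + (vmax - vstar th2 xs) *
    ((1 - exp (al * (x - xs))) / (1 - exp (- al * xs))).

Definition v_right (L th2 ar xs x : R) : R :=
  vstar th2 xs - vstar th2 xs *
    ((1 - exp (- ar * (x - xs))) / (1 - exp (- ar * (L - xs)))).

Definition feedback (L th2 vmax al ar xs x : R) : R :=
  if Rle_dec x xs then v_left th2 vmax al xs x else v_right L th2 ar xs x.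

Definition cfun (th1 eps om t : R) : R := th1 * (1 + eps * cos (om * t)).

Definition rhs (th1 th2 eps om t x U : R) : R :=
  cfun th1 eps om t *
   (- (th2 * x) / ((1 + th2 * x) * (1 - U)) + U / (1 - U)).

Definition cl_field (L th1 th2 eps om vmax al ar xs t x : R) : R :=
  rhs th1 th2 eps om t x (feedback L th2 vmax al ar xs x).

Definition cl_solution (L th1 th2 eps om vmax al ar xs x0 : R) (x : R -> R) : Prop :=
  x 0 = x0 /\
  (forall e, 0 < e -> exists d, 0 < d /\
      forall t, 0 <= t < d -> Rabs (x t - x0) < e) /\
  (forall t, 0 < t ->
      derivable_pt_lim x t (cl_field L th1 th2 eps om vmax al ar xs t (x t))).

(* Main.v *)
From Stdlib Require Import Reals Lra ClassicalEpsilon.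
From Stdlib Require Import Ranalysis5.
From Coquelicot Require Import Coquelicot.
Open Scope R_scope.
Require Import Defs.

Lemma mk_loc (x d : R) (P : R -> Prop) : 0 < d ->
  (forall y, Rabs (y - x) < d -> P y) -> locally x P.
Proof. intros Hd H. exists (mkposreal d Hd). intros y Hy. apply H. exact Hy. Qed.

Lemma cont_Rmax (a u : R) : continuity_pt (fun v => Rmax a v) u.
Proof.
  apply continuity_pt_ext with (f := fun v => (a + v + Rabs (v - a)) / 2).
  - intro v. unfold Rmax. destruct (Rle_dec a v).
    + rewrite Rabs_right by lra. lra.
    + rewrite Rabs_left by lra. lra.
  - apply continuity_pt_div; [| apply continuity_pt_const; intros ??; reflexivity | lra].
    apply continuity_pt_plus.
    + apply continuity_pt_plus; [apply continuity_pt_const; intros ??; reflexivity | apply derivable_continuous_pt, derivable_pt_id].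
    + apply (continuity_pt_comp (fun v => v - a) Rabs).
      * apply continuity_pt_minus; [apply derivable_continuous_pt, derivable_pt_id | apply continuity_pt_const; intros ??; reflexivity].
      * apply Rcontinuity_abs.
Qed.

Lemma cont_of_der (f : R -> R) (x l : R) : derivable_pt_lim f x l -> continuity_pt f x.
Proof. intro H. apply derivable_continuous_pt. exists l. exact H. Qed.

Lemma exist_incr (g : R -> R) (a b K : R) :
  a < b -> 0 < K ->
  (forall z, a <= z < b -> continuity_pt g z) ->
  (forall z, a <= z < b -> 0 < g z) ->
  (forall z, a <= z < b -> g z <= K * (b - z)) ->
  exists y : R -> R, y 0 = a /\
    (forall e, 0 < e -> exists d, 0 < d /\ forall s, 0 <= s < d -> Rabs (y s - a) < e) /\
    (forall s, 0 < s -> derivable_pt_lim y s (g (y s))) /\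
    (forall s, 0 <= s -> a <= y s < b).
Proof.
  intros Hab HK Hgc Hgp HgK.
  set (gm := fun u => g (Rmax a u)).
  assert (Hmax : forall u, u < b -> a <= Rmax a u < b).
  { intros u Hu. split; [apply Rmax_l|]. apply Rmax_lub_lt; lra. }
  assert (Hgmc : forall u, u < b -> continuity_pt gm u).
  { intros u Hu. unfold gm. apply (continuity_pt_comp (fun v => Rmax a v) g).
    apply cont_Rmax. apply Hgc, Hmax, Hu. }
  assert (Hgmp : forall u, u < b -> 0 < gm u).
  { intros u Hu. apply Hgp, Hmax, Hu. }
  set (ft := fun u => / gm u).
  assert (Hftc : forall u, u < b -> continuity_pt ft u).
  { intros u Hu. apply continuity_pt_inv. apply Hgmc, Hu. specialize (Hgmp u Hu). lra. }
  set (T := fun z => RInt ft a z).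
  assert (HTd : forall z, z < b -> derivable_pt_lim T z (ft z)).
  { intros z Hz. apply is_derive_Reals. apply (is_derive_RInt ft T a z).
    - apply (mk_loc z (b - z)). lra. intros y Hy. unfold T. apply (RInt_correct ft a y).
      apply ex_RInt_continuous. intros w Hw. apply continuity_pt_filterlim.
      apply Hftc. assert (Rmax a y < b). { apply Rmax_lub_lt. lra. apply Rabs_def2 in Hy. lra. }
      lra.
    - apply continuity_pt_filterlim. apply Hftc, Hz. }
  assert (HTa : T a = 0). { unfold T. apply (RInt_point (V:=R_CompleteNormedModule)). }
  assert (Hftp : forall u, u < b -> 0 < ft u).
  { intros u Hu. unfold ft. apply Rinv_0_lt_compat, Hgmp, Hu. }
  assert (HTinc : forall z1 z2, z1 < z2 < b -> T z1 < T z2).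
  { intros z1 z2 Hz. destruct (MVT_cor2 T ft z1 z2) as [c [Hc1 Hc2]]. lra.
    intros c Hc. apply HTd. lra.
    assert (0 < ft c) by (apply Hftp; lra). nra. }
  assert (HTle : forall z1 z2, z1 <= z2 < b -> T z1 <= T z2).
  { intros z1 z2 Hz. destruct (Req_dec z1 z2). subst; lra. apply Rlt_le, HTinc. lra. }
  assert (HTlow : forall z, a <= z < b -> (ln (b - a) - ln (b - z)) / K <= T z).
  { intros z Hz. destruct (Req_dec z a). subst. rewrite HTa. unfold Rdiv. rewrite Rminus_diag. lra.
    set (Psi := fun u => T u + ln (b - u) / K).
    set (dPsi := fun u => ft u + (/ (b - u) * (-1)) / K).
    destruct (MVT_cor2 Psi dPsi a z) as [c [Hc1 Hc2]]. lra.
    { intros c Hc. unfold Psi, dPsi. apply derivable_pt_lim_plus. apply HTd; lra.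
      unfold Rdiv. apply (derivable_pt_lim_scal_right (fun u => ln (b - u)) c (/ (b - c) * (-1)) (/ K)).
      apply (derivable_pt_lim_comp (fun u => b - u) ln c (-1) (/ (b - c))).
      replace (-1) with (0 - 1) by ring.
      apply derivable_pt_lim_minus. apply derivable_pt_lim_const. apply derivable_pt_lim_id.
      apply derivable_pt_lim_ln. lra. }
    assert (Hd : 0 <= dPsi c).
    { unfold dPsi. assert (ft c >= / (K * (b - c))).
      { unfold ft. apply Rle_ge, Rinv_le_contravar. apply Hgmp; lra.
        unfold gm. rewrite Rmax_right by lra. apply HgK. lra. }
      assert (/ (K * (b - c)) = (/ (b - c) * 1) / K). { field. split; lra. }
      lra. }
    unfold Psi in Hc1. rewrite HTa in Hc1.
    assert (0 <= dPsi c * (z - a)) by (apply Rmult_le_pos; lra).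
    unfold Rdiv in *. lra. }
  assert (Hunb : forall s, exists z, a <= z < b /\ s < T z).
  { intro s. set (q := exp (- (K * Rabs s) - 1)).
    assert (Hq0 : 0 < q) by apply exp_pos.
    assert (Hq1 : q < 1). { unfold q. pose proof (Rabs_pos s).
      assert (exp (- (K * Rabs s) - 1) < exp 0) by (apply exp_increasing; nra).
      rewrite exp_0 in *. lra. }
    exists (b - (b - a) * q).
    assert (Hz : a <= b - (b - a) * q < b) by nra. split. exact Hz.
    pose proof (HTlow _ Hz) as H.
    replace (b - (b - (b - a) * q)) with ((b - a) * q) in H by ring.
    rewrite ln_mult in H by lra. unfold q in H. rewrite ln_exp in H.
    replace ((ln (b - a) - (ln (b - a) + (- (K * Rabs s) - 1))) / K) with (Rabs s + / K) in H
      by (field; lra).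
    pose proof (Rle_abs s). pose proof (Rinv_0_lt_compat K HK). fold q in H. lra. }
  assert (HTcont : forall z, z < b -> continuity_pt T z).
  { intros z Hz. apply (cont_of_der _ _ (ft z)). apply HTd, Hz. }
  assert (Hsol : forall s, 0 <= s -> exists z, a <= z < b /\ T z = s).
  { intros s Hs. destruct (Req_dec s 0). subst. exists a. split. lra. exact HTa.
    destruct (Hunb s) as [z1 [Hz1 Hz1']].
    assert (a < z1). { destruct (Req_dec z1 a). subst. lra. lra. }
    destruct (IVT_interv (fun z => T z - s) a z1) as [z [Hz Hz']].
    - intros c Hc. apply continuity_pt_minus. apply HTcont; lra.
      apply continuity_pt_const. intros ??; reflexivity.
    - lra.
    - simpl. lra.
    - simpl. lra.
    - exists z. split. lra. simpl in Hz'. lra. }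
  set (y := fun s => epsilon (inhabits a) (fun z => a <= z < b /\ T z = s)).
  assert (Hy : forall s, 0 <= s -> a <= y s < b /\ T (y s) = s).
  { intros s Hs. unfold y. apply epsilon_spec. apply Hsol, Hs. }
  assert (Huniq : forall z1 z2, a <= z1 < b -> a <= z2 < b -> T z1 = T z2 -> z1 = z2).
  { intros z1 z2 H1 H2 H. destruct (Rtotal_order z1 z2) as [Hl|[He|Hg]]; auto.
    pose proof (HTinc z1 z2 (conj Hl (proj2 H2))). lra.
    pose proof (HTinc z2 z1 (conj Hg (proj2 H1))). lra. }
  assert (Hy0 : y 0 = a).
  { destruct (Hy 0 (Rle_refl 0)) as [H1 H2]. apply Huniq; auto. lra. rewrite H2, HTa. reflexivity. }
  assert (Hymon : forall s1 s2, 0 <= s1 <= s2 -> y s1 <= y s2).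
  { intros s1 s2 H. destruct (Hy s1) as [A1 A2]. lra. destruct (Hy s2) as [B1 B2]. lra.
    destruct (Rle_lt_dec (y s1) (y s2)) as [r|r]. auto.
    pose proof (HTinc (y s2) (y s1) (conj r (proj2 A1))). lra. }
  exists y. split; [exact Hy0|]. split; [|split].
  - intros e He. set (m := Rmin (a + e / 2) ((a + b) / 2)).
    assert (Hm : a < m < b). { unfold m. split. apply Rmin_glb_lt; lra.
      pose proof (Rmin_r (a + e/2) ((a+b)/2)). lra. }
    exists (T m). split. rewrite <- HTa. apply HTinc. lra.
    intros s Hs. destruct (Hy s (proj1 Hs)) as [H1 H2].
    assert (y s < m). { destruct (Rlt_le_dec (y s) m). auto.
      pose proof (HTle m (y s) (conj r (proj2 H1))). lra. }
    assert (m <= a + e / 2) by apply Rmin_l.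
    rewrite Rabs_right; lra.
  - intros s Hs.
    destruct (Hunb (s + 1)) as [z1 [Hz1 Hz1']].
    assert (Haz1 : a < z1). { destruct (Req_dec z1 a) as [E|E]. rewrite E, HTa in Hz1'. lra. lra. }
    assert (Hyc : continuity_pt y s).
    { apply (continuity_pt_recip_interv T y a z1 Haz1).
      - intros u v Hu Huv Hv. apply HTinc. lra.
      - intros u Hu1 Hu2. unfold comp, id. rewrite HTa in Hu1. apply Hy. lra.
      - intros u Hu1 Hu2. rewrite HTa in Hu1. destruct (Hy u Hu1) as [H1 H2].
        split. lra. destruct (Rle_lt_dec (y u) z1). auto.
        pose proof (HTinc z1 (y u) (conj r (proj2 H1))). lra.
      - intros c Hc. apply HTcont. lra.
      - rewrite HTa. lra. }
    assert (Prf : forall r, y (s / 2) <= r <= y (s + 1) -> derivable_pt T r).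
    { intros r Hr. exists (ft r). apply HTd.
      destruct (Hy (s + 1)) as [H1 H2]. lra. lra. }
    assert (Hincr : y (s / 2) <= y s <= y (s + 1)).
    { split; apply Hymon; lra. }
    assert (Hdp : derive_pt T (y s) (Prf (y s) Hincr) = ft (y s)).
    { apply derive_pt_eq_0. apply HTd. destruct (Hy s) as [B1 B2]; lra. }
    destruct (Hy s) as [B1 B2]. lra.
    assert (Hftv : ft (y s) = / g (y s)).
    { unfold ft, gm. rewrite Rmax_right by lra. reflexivity. }
    assert (Hg0 : 0 < g (y s)) by (apply Hgp; lra).
    pose proof (derivable_pt_lim_recip_interv T y (s / 2) (s + 1) s Prf Hyc) as HR.
    assert (Hfin : derivable_pt_lim y s (1 / derive_pt T (y s) (Prf (y s) Hincr))).
    { apply HR. lra. lra.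
      intros u Hu. unfold comp, id. apply Hy. lra.
      rewrite Hdp, Hftv. apply Rinv_neq_0_compat. lra. }
    rewrite Hdp, Hftv in Hfin.
    replace (g (y s)) with (1 / / g (y s)) by (field; lra). exact Hfin.
  - intros s Hs. apply Hy, Hs.
Qed.

Lemma barrier (h : R -> R) :
  (forall t, 0 < t -> continuity_pt h t) ->
  (forall t, 0 <= t -> h t <= h 0 -> exists eta, 0 < eta /\ forall u, t < u < t + eta -> h u <= h t) ->
  forall t, 0 <= t -> h t <= h 0.
Proof.
  intros Hc Hloc T HT. destruct (Rle_lt_dec (h T) (h 0)) as [r|r]; [exact r|exfalso].
  set (E := fun s => 0 <= s <= T /\ forall u, 0 <= u <= s -> h u <= h 0).
  assert (HE0 : E 0). { split. lra. intros u Hu. replace u with 0 by lra. lra. }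
  destruct (completeness E) as [m [Hub Hlub]].
  { exists T. intros s Hs. apply Hs. }
  { exists 0. exact HE0. }
  assert (Hm0 : 0 <= m) by (apply Hub, HE0).
  assert (HmT : m <= T). { apply Hlub. intros s Hs. apply Hs. }
  assert (Hbelow : forall u, 0 <= u < m -> h u <= h 0).
  { intros u Hu. destruct (Rle_lt_dec u 0) as [r0|r0].
    replace u with 0 by lra. lra.
    assert (~ is_upper_bound E u). { intro Hc'. specialize (Hlub u Hc'). lra. }
    apply Classical_Pred_Type.not_all_ex_not in H. destruct H as [s Hs].
    apply Classical_Prop.imply_to_and in Hs. destruct Hs as [Hs1 Hs2].
    apply Hs1. lra. }
  assert (Hmval : h m <= h 0).
  { destruct (Req_dec m 0) as [E0|E0]. rewrite E0. lra.
    destruct (Rle_lt_dec (h m) (h 0)) as [r1|r1]. exact r1. exfalso.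
    specialize (Hc m (ltac:(lra))). unfold continuity_pt, continue_in, limit1_in, limit_in in Hc.
    destruct (Hc (h m - h 0)) as [d [Hd Hd']]. lra.
    set (u := Rmax 0 (m - d / 2)).
    assert (Hu : 0 <= u < m). { unfold u. split. apply Rmax_l. apply Rmax_lub_lt; lra. }
    assert (Hud : m - d / 2 <= u) by apply Rmax_r.
    specialize (Hd' u). simpl in Hd'. unfold R_dist, D_x, no_cond in Hd'.
    assert (Rabs (h u - h m) < h m - h 0).
    { apply Hd'. split. split. auto. lra. rewrite Rabs_left; lra. }
    pose proof (Hbelow u Hu). apply Rabs_def2 in H. lra. }
  destruct (Hloc m Hm0 Hmval) as [eta [Heta Heta']].
  assert (HmT' : m < T). { destruct (Req_dec m T). subst. lra. lra. }
  set (s' := Rmin (m + eta / 2) T).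
  assert (Hs' : E s').
  { unfold s'. split. split. apply Rmin_glb; lra. apply Rmin_r.
    intros u Hu. destruct (Rlt_le_dec u m). apply Hbelow; lra.
    destruct (Req_dec u m). subst. lra.
    pose proof (Rmin_l (m + eta / 2) T).
    pose proof (Heta' u (ltac:(lra))). lra. }
  specialize (Hub s' Hs'). unfold s' in Hub.
  assert (m < Rmin (m + eta / 2) T) by (apply Rmin_glb_lt; lra). lra.
Qed.

Definition rW (L xs z : R) : R := if Rle_dec z xs then / (xs * xs) else / ((L - xs) * (L - xs)).
Definition WW (L xs z : R) : R := (z - xs) * (z - xs) * rW L xs z.
Definition WW' (L xs z : R) : R := 2 * (z - xs) * rW L xs z.

Lemma rW_pos (L xs z : R) : 0 < xs < L -> 0 < rW L xs z.
Proof. intro H. unfold rW. destruct (Rle_dec z xs); apply Rinv_0_lt_compat; nra. Qed.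

Lemma rW_le (L xs z : R) : 0 < xs < L -> rW L xs z <= / (xs * xs) + / ((L - xs) * (L - xs)).
Proof.
  intro H. assert (0 < / (xs * xs)) by (apply Rinv_0_lt_compat; nra).
  assert (0 < / ((L - xs) * (L - xs))) by (apply Rinv_0_lt_compat; nra).
  unfold rW. destruct (Rle_dec z xs); lra.
Qed.

Lemma WW_der (L xs z : R) : 0 < xs < L -> derivable_pt_lim (WW L xs) z (WW' L xs z).
Proof.
  intro Hx. destruct (Rtotal_order z xs) as [Hl|[He|Hg]].
  - apply is_derive_Reals.
    apply (is_derive_ext_loc (fun u => (u - xs) * (u - xs) * / (xs * xs))).
    + apply (mk_loc z (xs - z)). lra. intros y Hy. apply Rabs_def2 in Hy.
      unfold WW, rW. destruct (Rle_dec y xs); [reflexivity| lra].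
    + unfold WW', rW. destruct (Rle_dec z xs); [|lra].
      auto_derive. auto. ring.
  - subst z. intros eps Heps.
    set (R0 := / (xs * xs) + / ((L - xs) * (L - xs))).
    assert (HR0 : 0 < R0). { unfold R0. assert (0 < / (xs * xs)) by (apply Rinv_0_lt_compat; nra).
      assert (0 < / ((L - xs) * (L - xs))) by (apply Rinv_0_lt_compat; nra). lra. }
    exists (mkposreal (eps / R0) (Rdiv_lt_0_compat _ _ Heps HR0)). simpl. intros h Hh0 Hh.
    unfold WW, WW'. replace (xs - xs) with 0 by ring.
    replace ((xs + h - xs) * (xs + h - xs) * rW L xs (xs + h) - 0 * 0 * rW L xs xs)
      with (h * (h * rW L xs (xs + h))) by ring.
    replace (h * (h * rW L xs (xs + h)) / h - 2 * 0 * rW L xs xs) with (h * rW L xs (xs + h))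
      by (field; auto).
    pose proof (rW_pos L xs (xs + h) Hx). pose proof (rW_le L xs (xs + h) Hx).
    rewrite Rabs_mult, (Rabs_right (rW _ _ _)) by lra.
    apply Rle_lt_trans with (Rabs h * R0). apply Rmult_le_compat_l. apply Rabs_pos. exact H0.
    apply Rlt_le_trans with (eps / R0 * R0). apply Rmult_lt_compat_r; auto.
    right. field. lra.
  - apply is_derive_Reals.
    apply (is_derive_ext_loc (fun u => (u - xs) * (u - xs) * / ((L - xs) * (L - xs)))).
    + apply (mk_loc z (z - xs)). lra. intros y Hy. apply Rabs_def2 in Hy.
      unfold WW, rW. destruct (Rle_dec y xs); [lra| reflexivity].
    + unfold WW', rW. destruct (Rle_dec z xs); [lra|].
      auto_derive. auto. ring.
Qed.

Lemma WW_lt1 (L xs z : R) : 0 < xs < L -> WW L xs z < 1 -> 0 < z < L.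
Proof.
  intros H HW. unfold WW, rW in HW. destruct (Rle_dec z xs).
  - assert ((z - xs) * (z - xs) < xs * xs).
    { apply Rmult_lt_reg_r with (/ (xs * xs)). apply Rinv_0_lt_compat; nra.
      rewrite Rinv_r by nra. lra. }
    nra.
  - assert ((z - xs) * (z - xs) < (L - xs) * (L - xs)).
    { apply Rmult_lt_reg_r with (/ ((L - xs) * (L - xs))). apply Rinv_0_lt_compat; nra.
      rewrite Rinv_r by nra. lra. }
    nra.
Qed.

Lemma WW_le1 (L xs z : R) : 0 < xs < L -> WW L xs z <= 1 -> 0 <= z <= L.
Proof.
  intros H HW. unfold WW, rW in HW. destruct (Rle_dec z xs).
  - assert ((z - xs) * (z - xs) <= xs * xs).
    { apply Rmult_le_reg_r with (/ (xs * xs)). apply Rinv_0_lt_compat; nra.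
      rewrite Rinv_r by nra. lra. }
    nra.
  - assert ((z - xs) * (z - xs) <= (L - xs) * (L - xs)).
    { apply Rmult_le_reg_r with (/ ((L - xs) * (L - xs))). apply Rinv_0_lt_compat; nra.
      rewrite Rinv_r by nra. lra. }
    nra.
Qed.

Lemma WW_in (L xs z : R) : 0 < xs < L -> 0 <= z <= L -> WW L xs z <= 1.
Proof.
  intros H Hz. unfold WW, rW. destruct (Rle_dec z xs).
  - apply Rmult_le_reg_r with (xs * xs). nra.
    rewrite Rmult_assoc, Rinv_l by nra. nra.
  - apply Rmult_le_reg_r with ((L - xs) * (L - xs)). nra.
    rewrite Rmult_assoc, Rinv_l by nra. nra.
Qed.

Lemma WW_ge0 (L xs z : R) : 0 < xs < L -> 0 <= WW L xs z.
Proof. intro H. unfold WW. pose proof (rW_pos L xs z H). apply Rmult_le_pos. apply Rle_0_sqr. lra. Qed.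

Lemma WW_upper (L xs z : R) : 0 < xs < L ->
  (z - xs) * (z - xs) <= L * L * WW L xs z.
Proof.
  intros H. unfold WW, rW. destruct (Rle_dec z xs).
  - assert (xs * xs * / (xs * xs) = 1) by (field; lra).
    assert (0 <= (z - xs) * (z - xs)) by nra.
    assert (0 < / (xs * xs)) by (apply Rinv_0_lt_compat; nra).
    assert (xs * xs <= L * L) by nra.
    assert (1 <= L * L * / (xs * xs)) by nra. nra.
  - assert ((L - xs) * (L - xs) * / ((L - xs) * (L - xs)) = 1) by (field; lra).
    assert (0 <= (z - xs) * (z - xs)) by nra.
    assert (0 < / ((L - xs) * (L - xs))) by (apply Rinv_0_lt_compat; nra).
    assert ((L - xs) * (L - xs) <= L * L) by nra.
    assert (1 <= L * L * / ((L - xs) * (L - xs))) by nra. nra.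
Qed.

Lemma WW_lower (L xs z : R) : 0 < xs < L ->
  WW L xs z <= (z - xs) * (z - xs) * / (Rmin xs (L - xs) * Rmin xs (L - xs)).
Proof.
  intros H. unfold WW. apply Rmult_le_compat_l. apply Rle_0_sqr.
  assert (0 < Rmin xs (L - xs)) by (apply Rmin_glb_lt; lra).
  pose proof (Rmin_l xs (L - xs)). pose proof (Rmin_r xs (L - xs)).
  unfold rW. destruct (Rle_dec z xs); apply Rinv_le_contravar; nra.
Qed.

Lemma lin_der (a t : R) : derivable_pt_lim (fun t => a * t) t a.
Proof. apply is_derive_Reals. auto_derive. auto. ring. Qed.

Lemma stab_abstract (c gf x : R -> R) (x0 xs L m cmin d0 : R) :
  0 < xs < L -> 0 <= x0 < L -> 0 < m -> 0 < cmin -> 0 < d0 ->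
  (forall t, cmin <= c t) ->
  (forall z, - d0 < z <= L -> (z - xs) * gf z <= - m * ((z - xs) * (z - xs))) ->
  x 0 = x0 ->
  (forall e, 0 < e -> exists d, 0 < d /\ forall t, 0 <= t < d -> Rabs (x t - x0) < e) ->
  (forall t, 0 < t -> derivable_pt_lim x t (c t * gf (x t))) ->
  forall t, 0 <= t ->
    0 <= x t <= L /\
    Rabs (x t - xs) <= L / Rmin xs (L - xs) * exp (- (m * cmin) * t) * Rabs (x0 - xs).
Proof.
  intros Hxs Hx0 Hm Hc Hd0 Hcm Hly Hx00 Hrc Hder.
  set (lam := m * cmin).
  assert (Hlam : 0 < lam) by (unfold lam; nra).
  set (h := fun t => WW L xs (x t) * exp (2 * lam * t)).
  set (dh := fun t => WW' L xs (x t) * (c t * gf (x t)) * exp (2 * lam * t)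
                      + WW L xs (x t) * (exp (2 * lam * t) * (2 * lam))).
  assert (Hhd : forall t, 0 < t -> derivable_pt_lim h t (dh t)).
  { intros t Ht. unfold h, dh.
    apply (derivable_pt_lim_mult (fun t => WW L xs (x t)) (fun t => exp (2 * lam * t))).
    - apply (derivable_pt_lim_comp x (WW L xs)). apply Hder, Ht. apply WW_der, Hxs.
    - apply (derivable_pt_lim_comp (fun t => 2 * lam * t) exp t (2 * lam)).
      apply lin_der. apply derivable_pt_lim_exp. }
  assert (Hdhneg : forall t, - d0 < x t <= L -> dh t <= 0).
  { intros t Hxt. unfold dh, WW, WW'.
    pose proof (Hly (x t) Hxt) as H1. pose proof (rW_pos L xs (x t) Hxs) as Hr.
    pose proof (exp_pos (2 * lam * t)) as He. pose proof (Hcm t).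
    set (E := exp (2 * lam * t)) in *. set (r := rW L xs (x t)) in *.
    set (q := (x t - xs) * gf (x t)) in *. set (s2 := (x t - xs) * (x t - xs)) in *.
    assert (0 <= s2) by (unfold s2; apply Rle_0_sqr).
    replace (2 * (x t - xs) * r * (c t * gf (x t)) * E + s2 * r * (E * (2 * lam)))
      with (2 * r * E * (c t * q + lam * s2)) by (unfold q, s2; ring).
    assert (c t * q + lam * s2 <= 0).
    { unfold lam. assert (c t * q <= c t * (- m * s2)) by (apply Rmult_le_compat_l; lra).
      assert (0 <= (c t - cmin) * (m * s2)) by (apply Rmult_le_pos; nra).
      nra. }
    assert (0 <= 2 * r * E) by nra. nra. }
  assert (Hxc : forall t, 0 < t -> continuity_pt x t).
  { intros t Ht. apply (cont_of_der _ _ _ (Hder t Ht)). }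
  assert (Hh0 : h 0 = WW L xs x0).
  { unfold h. rewrite Hx00. replace (2 * lam * 0) with 0 by ring. rewrite exp_0. ring. }
  assert (HW0 : WW L xs x0 <= 1) by (apply WW_in; lra).
  assert (Hhrc : forall e, 0 < e -> exists d, 0 < d /\ forall s, 0 <= s < d -> Rabs (h s - h 0) < e).
  { set (xt := fun s => if Rle_dec s 0 then x0 else x s).
    assert (Hxt : continuity_pt xt 0).
    { unfold continuity_pt, continue_in, limit1_in, limit_in. intros e He.
      destruct (Hrc e He) as [d [Hd Hd']]. exists d. split; auto.
      intros s [[_ Hs1] Hs2]. simpl in *. unfold R_dist in *. unfold xt.
      destruct (Rle_dec 0 0); [|lra]. destruct (Rle_dec s 0).
      rewrite Rminus_diag, Rabs_R0. auto.
      apply Hd'. rewrite Rminus_0_r in Hs2. rewrite Rabs_right in Hs2 by lra. lra. }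
    set (H := fun s => WW L xs (xt s) * exp (2 * lam * s)).
    assert (HH : continuity_pt H 0).
    { unfold H. apply continuity_pt_mult.
      - apply (continuity_pt_comp xt (WW L xs)). exact Hxt.
        apply (cont_of_der _ _ _ (WW_der L xs _ Hxs)).
      - apply (continuity_pt_comp (fun s => 2 * lam * s) exp).
        apply (cont_of_der _ _ (2 * lam)). apply lin_der.
        apply derivable_continuous_pt, derivable_pt_exp. }
    intros e He. unfold continuity_pt, continue_in, limit1_in, limit_in in HH.
    destruct (HH e He) as [d [Hd Hd']]. exists d. split; auto.
    intros s Hs. destruct (Req_dec s 0) as [E0|E0]. subst s. rewrite Rminus_diag, Rabs_R0. auto.
    assert (Hs' : H s = h s). { unfold H, h, xt. destruct (Rle_dec s 0). lra. reflexivity. }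
    assert (H0' : H 0 = h 0). { unfold H, h, xt. destruct (Rle_dec 0 0); [|lra]. rewrite Hx00. reflexivity. }
    rewrite <- Hs', <- H0'. apply Hd'. simpl. unfold D_x, no_cond, R_dist.
    split. split; auto. rewrite Rminus_0_r, Rabs_right; lra. }
  assert (Hbar : forall t, 0 <= t -> h t <= h 0).
  { apply barrier.
    - intros t Ht. apply (cont_of_der _ _ _ (Hhd t Ht)).
    - intros t Ht Hle. destruct (Req_dec t 0) as [E0|E0].
      + subst t. set (e1 := Rmin d0 (L - x0)).
        assert (He1 : 0 < e1) by (apply Rmin_glb_lt; lra).
        destruct (Hrc e1 He1) as [d [Hd Hd']]. exists d. split; auto.
        intros u Hu. destruct (Rle_lt_dec (h u) (h 0)) as [r|r]; [exact r|exfalso].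
        destruct (Hhrc (h u - h 0)) as [d' [Hd'p Hd'']]. lra.
        set (ep := Rmin d' u / 2).
        assert (Hep : 0 < ep < u). { unfold ep. pose proof (Rmin_r d' u).
          assert (0 < Rmin d' u) by (apply Rmin_glb_lt; lra). lra. }
        assert (Hep' : ep < d'). { unfold ep. pose proof (Rmin_l d' u).
          assert (0 < Rmin d' u) by (apply Rmin_glb_lt; lra). lra. }
        pose proof (Hd'' ep (ltac:(lra))) as Hhe. apply Rabs_def2 in Hhe.
        destruct (MVT_cor2 h dh ep u) as [cc [Hcc1 Hcc2]]. lra.
        intros cc Hcc. apply Hhd. lra.
        assert (dh cc <= 0).
        { apply Hdhneg. pose proof (Hd' cc (ltac:(lra))) as Hx. apply Rabs_def2 in Hx.
          pose proof (Rmin_l d0 (L - x0)). pose proof (Rmin_r d0 (L - x0)). unfold e1 in Hx. lra. }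
        assert (dh cc * (u - ep) <= 0). { apply Rmult_le_0_r; lra. }
        lra.
      + assert (Ht' : 0 < t) by lra.
        assert (HWt : WW L xs (x t) < 1).
        { destruct (Rlt_le_dec (WW L xs (x t)) 1) as [r|r]; auto. exfalso.
          assert (1 < exp (2 * lam * t)). { rewrite <- exp_0. apply exp_increasing. nra. }
          rewrite Hh0 in Hle. unfold h in Hle. nra. }
        pose proof (WW_lt1 L xs (x t) Hxs HWt) as Hin.
        specialize (Hxc t Ht'). unfold continuity_pt, continue_in, limit1_in, limit_in in Hxc.
        destruct (Hxc (Rmin (x t) (L - x t))) as [d [Hd Hd']].
        { apply Rmin_glb_lt; lra. }
        exists d. split; auto. intros u Hu.
        destruct (MVT_cor2 h dh t u) as [cc [Hcc1 Hcc2]]. lra.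
        intros cc Hcc. apply Hhd. lra.
        assert (dh cc <= 0).
        { apply Hdhneg.
          assert (Hx : Rabs (x cc - x t) < Rmin (x t) (L - x t)).
          { destruct (Req_dec cc t). subst cc. rewrite Rminus_diag, Rabs_R0. apply Rmin_glb_lt; lra.
            apply Hd'. simpl. unfold D_x, no_cond, R_dist. split. split; auto.
            rewrite Rabs_right; lra. }
          apply Rabs_def2 in Hx.
          pose proof (Rmin_l (x t) (L - x t)). pose proof (Rmin_r (x t) (L - x t)). lra. }
        assert (dh cc * (u - t) <= 0). { apply Rmult_le_0_r; lra. }
        lra. }
  intros t Ht. specialize (Hbar t Ht). rewrite Hh0 in Hbar. unfold h in Hbar.
  pose proof (exp_pos (2 * lam * t)) as He.
  assert (1 <= exp (2 * lam * t)).
  { destruct (Req_dec t 0). subst. replace (2 * lam * 0) with 0 by ring. rewrite exp_0. lra.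
    rewrite <- exp_0. left. apply exp_increasing. nra. }
  pose proof (WW_ge0 L xs (x t) Hxs).
  split.
  - apply (WW_le1 L xs). exact Hxs. nra.
  - set (dm := Rmin xs (L - xs)).
    assert (Hdm : 0 < dm) by (apply Rmin_glb_lt; lra).
    assert (HE : exp (- lam * t) * exp (- lam * t) * exp (2 * lam * t) = 1).
    { rewrite <- !exp_plus. replace (- lam * t + - lam * t + 2 * lam * t) with 0 by ring. apply exp_0. }
    assert (HWt : WW L xs (x t) <= WW L xs x0 * (exp (- lam * t) * exp (- lam * t))).
    { apply Rmult_le_reg_r with (exp (2 * lam * t)). lra.
      replace (WW L xs x0 * (exp (- lam * t) * exp (- lam * t)) * exp (2 * lam * t))
        with (WW L xs x0 * (exp (- lam * t) * exp (- lam * t) * exp (2 * lam * t))) by ring.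
      rewrite HE. lra. }
    pose proof (WW_upper L xs (x t) Hxs) as Hup.
    pose proof (WW_lower L xs x0 Hxs) as Hlo. fold dm in Hlo.
    pose proof (exp_pos (- lam * t)) as Hel.
    set (el := exp (- lam * t)) in *.
    rewrite <- (Rabs_right (L / dm * el * Rabs (x0 - xs))).
    2: { apply Rle_ge. apply Rmult_le_pos. apply Rmult_le_pos. apply Rlt_le, Rdiv_lt_0_compat; lra. lra. apply Rabs_pos. }
    apply Rsqr_le_abs_0. unfold Rsqr.
    replace (L / dm * el * Rabs (x0 - xs) * (L / dm * el * Rabs (x0 - xs)))
      with (L * L * ((Rabs (x0 - xs) * Rabs (x0 - xs)) * / (dm * dm)) * (el * el))
      by (field; lra).
    rewrite <- Rabs_mult, Rabs_right by (apply Rle_ge, Rle_0_sqr).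
    assert (0 <= el * el) by nra. assert (0 <= L * L) by nra.
    assert (WW L xs (x t) <= (x0 - xs) * (x0 - xs) * / (dm * dm) * (el * el)).
    { apply Rle_trans with (WW L xs x0 * (el * el)). exact HWt.
      apply Rmult_le_compat_r; auto. }
    apply Rle_trans with (L * L * WW L xs (x t)). exact Hup.
    replace (L * L * ((x0 - xs) * (x0 - xs) * / (dm * dm)) * (el * el))
      with (L * L * ((x0 - xs) * (x0 - xs) * / (dm * dm) * (el * el))) by ring.
    apply Rmult_le_compat_l; auto.
Qed.
Definition Hyp (L th2 vmax al ar xs : R) : Prop :=
  0 < L /\ 0 < th2 /\ 0 < xs < L /\ vstar th2 xs < vmax < 1 /\ 0 < al /\ 0 < ar.

Definition gF (L th2 vmax al ar xs z : R) : R :=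
  - (th2 * z) / ((1 + th2 * z) * (1 - feedback L th2 vmax al ar xs z)) +
  feedback L th2 vmax al ar xs z / (1 - feedback L th2 vmax al ar xs z).

Lemma exp_le (a b : R) : a <= b -> exp a <= exp b.
Proof. intro H. destruct (Req_dec a b). subst; lra. left. apply exp_increasing. lra. Qed.

Lemma vstar_bounds (th2 xs : R) : 0 < th2 -> 0 < xs -> 0 < vstar th2 xs < 1.
Proof.
  intros H1 H2. unfold vstar. split.
  apply Rdiv_lt_0_compat; nra.
  apply Rmult_lt_reg_r with (1 + th2 * xs). nra.
  unfold Rdiv. rewrite Rmult_assoc, Rinv_l by nra. nra.
Qed.

Lemma frac01 (e E0 : R) : 0 < E0 < 1 -> E0 <= e <= 1 ->
  0 <= (1 - e) / (1 - E0) <= 1.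
Proof.
  intros H1 H2. set (F := (1 - e) / (1 - E0)).
  assert (F * (1 - E0) = 1 - e) by (unfold F; field; lra).
  split; nra.
Qed.

Lemma fb_left (L th2 vmax al ar xs z : R) : Hyp L th2 vmax al ar xs -> 0 <= z <= xs ->
  feedback L th2 vmax al ar xs z = v_left th2 vmax al xs z /\
  vstar th2 xs <= feedback L th2 vmax al ar xs z <= vmax /\
  feedback L th2 vmax al ar xs z - vstar th2 xs <=
     (vmax - vstar th2 xs) * al * (xs - z) / (1 - exp (- al * xs)).
Proof.
  intros [HL [Hth [Hxs [Hv [Hal Har]]]]] Hz.
  assert (Hfb : feedback L th2 vmax al ar xs z = v_left th2 vmax al xs z).
  { unfold feedback. destruct (Rle_dec z xs); [reflexivity|lra]. }
  rewrite Hfb. split; [reflexivity|]. unfold v_left.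
  set (vs := vstar th2 xs) in *. set (E0 := exp (- al * xs)). set (e := exp (al * (z - xs))).
  assert (HE0 : 0 < E0 < 1). { split. apply exp_pos. unfold E0. rewrite <- exp_0.
    apply exp_increasing. nra. }
  assert (He : E0 <= e <= 1). { split; unfold E0, e. apply exp_le. nra.
    rewrite <- exp_0. apply exp_le. nra. }
  assert (He2 : 1 + al * (z - xs) <= e) by apply exp_ineq1_le.
  pose proof (frac01 e E0 HE0 He).
  split. split; nra.
  replace (vs + (vmax - vs) * ((1 - e) / (1 - E0)) - vs) with ((vmax - vs) * (1 - e) / (1 - E0))
    by (field; lra).
  replace ((vmax - vs) * al * (xs - z) / (1 - E0)) with ((vmax - vs) * (al * (xs - z) * / (1 - E0))) by (unfold Rdiv; ring).
  replace ((vmax - vs) * (1 - e) / (1 - E0)) with ((vmax - vs) * ((1 - e) * / (1 - E0))) by (unfold Rdiv; ring).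
  apply Rmult_le_compat_l. lra. apply Rmult_le_compat_r. left; apply Rinv_0_lt_compat; lra. nra.
Qed.

Lemma fb_right (L th2 vmax al ar xs z : R) : Hyp L th2 vmax al ar xs -> xs < z <= L ->
  feedback L th2 vmax al ar xs z = v_right L th2 ar xs z /\
  0 <= feedback L th2 vmax al ar xs z <= vstar th2 xs /\
  vstar th2 xs - feedback L th2 vmax al ar xs z <=
     vstar th2 xs * ar * (z - xs) / (1 - exp (- ar * (L - xs))).
Proof.
  intros [HL [Hth [Hxs [Hv [Hal Har]]]]] Hz.
  assert (Hfb : feedback L th2 vmax al ar xs z = v_right L th2 ar xs z).
  { unfold feedback. destruct (Rle_dec z xs); [lra|reflexivity]. }
  rewrite Hfb. split; [reflexivity|]. unfold v_right.
  pose proof (vstar_bounds th2 xs Hth (proj1 Hxs)) as Hvs.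
  set (vs := vstar th2 xs) in *. set (E0 := exp (- ar * (L - xs))). set (e := exp (- ar * (z - xs))).
  assert (HE0 : 0 < E0 < 1). { split. apply exp_pos. unfold E0. rewrite <- exp_0.
    apply exp_increasing. nra. }
  assert (He : E0 <= e <= 1). { split; unfold E0, e. apply exp_le. nra.
    rewrite <- exp_0. apply exp_le. nra. }
  assert (He2 : 1 + - ar * (z - xs) <= e) by apply exp_ineq1_le.
  pose proof (frac01 e E0 HE0 He).
  split. split; nra.
  replace (vs - (vs - vs * ((1 - e) / (1 - E0)))) with (vs * (1 - e) / (1 - E0))
    by (field; lra).
  replace (vs * ar * (z - xs) / (1 - E0)) with (vs * (ar * (z - xs) * / (1 - E0))) by (unfold Rdiv; ring).
  replace (vs * (1 - e) / (1 - E0)) with (vs * ((1 - e) * / (1 - E0))) by (unfold Rdiv; ring).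
  apply Rmult_le_compat_l. lra. apply Rmult_le_compat_r. left; apply Rinv_0_lt_compat; lra. nra.
Qed.

Lemma fb_xs (L th2 vmax al ar xs : R) : feedback L th2 vmax al ar xs xs = vstar th2 xs.
Proof.
  unfold feedback. destruct (Rle_dec xs xs); [|lra]. unfold v_left.
  replace (xs - xs) with 0 by ring. rewrite Rmult_0_r, exp_0.
  unfold Rdiv. rewrite Rminus_diag. ring.
Qed.

Lemma gF_form (L th2 vmax al ar xs z : R) : 0 < th2 -> 0 <= z ->
  feedback L th2 vmax al ar xs z < 1 ->
  gF L th2 vmax al ar xs z =
   (feedback L th2 vmax al ar xs z - th2 * z / (1 + th2 * z)) / (1 - feedback L th2 vmax al ar xs z).
Proof. intros H1 H2 H3. unfold gF. field. split; nra. Qed.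

Lemma vs_w (th2 xs z : R) : 0 < th2 -> 0 < xs -> 0 <= z ->
  vstar th2 xs - th2 * z / (1 + th2 * z) = th2 * (xs - z) / ((1 + th2 * xs) * (1 + th2 * z)).
Proof. intros. unfold vstar. field. split; nra. Qed.

Lemma div_ge (N D : R) : 0 <= N -> 0 < D <= 1 -> N <= N / D.
Proof. intros H1 H2. assert (N / D * D = N) by (field; lra). nra. Qed.

Lemma div_le (N D : R) : N <= 0 -> 0 < D <= 1 -> N / D <= N.
Proof. intros H1 H2. assert (N / D * D = N) by (field; lra). nra. Qed.

Lemma div_le2 (N D D' : R) : 0 <= N -> 0 < D' <= D -> N / D <= N / D'.
Proof. intros H1 H2. unfold Rdiv. apply Rmult_le_compat_l. auto. apply Rinv_le_contravar; lra. Qed.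

Definition mm (L th2 xs : R) : R := th2 / ((1 + th2 * xs) * (1 + th2 * L)).

Lemma mm_pos L th2 vmax al ar xs : Hyp L th2 vmax al ar xs -> 0 < mm L th2 xs.
Proof. intros [HL [Hth [[Hx1 Hx2] _]]]. unfold mm. apply Rdiv_lt_0_compat. lra. apply Rmult_lt_0_compat; nra. Qed.

Lemma B1 L th2 vmax al ar xs z : Hyp L th2 vmax al ar xs -> 0 <= z <= xs ->
  mm L th2 xs * (xs - z) <= gF L th2 vmax al ar xs z.
Proof.
  intros HH Hz. pose proof HH as [HL [Hth [Hxs [Hv [Hal Har]]]]].
  destruct (fb_left L th2 vmax al ar xs z HH Hz) as [_ [Hb _]].
  pose proof (vstar_bounds th2 xs Hth (proj1 Hxs)) as Hvs.
  rewrite gF_form by (auto; lra).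
  pose proof (vs_w th2 xs z Hth (proj1 Hxs) (proj1 Hz)) as Hw.
  set (U := feedback L th2 vmax al ar xs z) in *. set (w := th2 * z / (1 + th2 * z)) in *.
  assert (mm L th2 xs * (xs - z) <= th2 * (xs - z) / ((1 + th2 * xs) * (1 + th2 * z))).
  { destruct Hxs as [Hx1 Hx2]. destruct Hz as [Hz1 Hz2].
    replace (mm L th2 xs * (xs - z)) with (th2 * (xs - z) / ((1 + th2 * xs) * (1 + th2 * L))) by (unfold mm; field; split; nra).
    apply div_le2. nra. split. apply Rmult_lt_0_compat; nra. apply Rmult_le_compat_l; nra. }
  assert (0 <= mm L th2 xs * (xs - z)) by (apply Rmult_le_pos; [apply Rlt_le, (mm_pos L th2 vmax al ar xs HH) | lra]).
  apply Rle_trans with (U - w). lra. apply div_ge; lra.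
Qed.

Definition K1 (th2 vmax al xs : R) : R :=
  ((vmax - vstar th2 xs) * al / (1 - exp (- al * xs)) + th2) / (1 - vmax).

Lemma K1_pos L th2 vmax al ar xs : Hyp L th2 vmax al ar xs -> 0 < K1 th2 vmax al xs.
Proof.
  intros [HL [Hth [Hxs [Hv [Hal Har]]]]]. unfold K1.
  assert (exp (- al * xs) < 1). { rewrite <- exp_0. apply exp_increasing. nra. }
  apply Rdiv_lt_0_compat; [|lra]. apply Rplus_le_lt_0_compat; [|lra].
  apply Rlt_le, Rdiv_lt_0_compat; nra.
Qed.

Lemma B2 L th2 vmax al ar xs z : Hyp L th2 vmax al ar xs -> 0 <= z <= xs ->
  gF L th2 vmax al ar xs z <= K1 th2 vmax al xs * (xs - z).
Proof.
  intros HH Hz. pose proof HH as [HL [Hth [Hxs [Hv [Hal Har]]]]].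
  destruct (fb_left L th2 vmax al ar xs z HH Hz) as [_ [Hb Hb2]].
  pose proof (vstar_bounds th2 xs Hth (proj1 Hxs)) as Hvs.
  rewrite gF_form by (auto; lra).
  pose proof (vs_w th2 xs z Hth (proj1 Hxs) (proj1 Hz)) as Hw.
  assert (HE : exp (- al * xs) < 1). { rewrite <- exp_0. apply exp_increasing. nra. }
  set (U := feedback L th2 vmax al ar xs z) in *. set (w := th2 * z / (1 + th2 * z)) in *.
  set (vs := vstar th2 xs) in *. set (E := exp (- al * xs)) in *.
  destruct Hxs as [Hx1 Hx2]. destruct Hz as [Hz1 Hz2].
  assert (Hvw : th2 * (xs - z) / ((1 + th2 * xs) * (1 + th2 * z)) <= th2 * (xs - z) / 1).
  { apply div_le2. nra. split. lra. assert (0 <= th2 * xs * (1 + th2 * z)) by (apply Rmult_le_pos; nra). nra. }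
  unfold Rdiv at 2 in Hvw. rewrite Rinv_1, Rmult_1_r in Hvw.
  assert (HEp : 0 < E) by apply exp_pos.
  apply Rle_trans with ((U - w) / (1 - vmax)). apply div_le2. 2: lra.
  { assert (0 <= th2 * (xs - z) / ((1 + th2 * xs) * (1 + th2 * z))).
    { apply Rmult_le_pos. nra. left. apply Rinv_0_lt_compat. apply Rmult_lt_0_compat; nra. }
    lra. }
  unfold K1. fold vs E.
  apply Rle_trans with (((vmax - vs) * al * (xs - z) / (1 - E) + th2 * (xs - z)) / (1 - vmax)).
  { unfold Rdiv at 1 3. apply Rmult_le_compat_r. left; apply Rinv_0_lt_compat; lra. lra. }
  right. field. lra.
Qed.

Lemma fb_right' L th2 vmax al ar xs z : Hyp L th2 vmax al ar xs -> xs <= z <= L ->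
  0 <= feedback L th2 vmax al ar xs z <= vstar th2 xs.
Proof.
  intros HH Hz. destruct (Req_dec z xs) as [E|E].
  - subst. rewrite fb_xs. pose proof HH as [_ [Hth [Hxs _]]].
    pose proof (vstar_bounds th2 xs Hth (proj1 Hxs)). lra.
  - apply (fb_right L th2 vmax al ar xs z HH). lra.
Qed.

Lemma B3 L th2 vmax al ar xs z : Hyp L th2 vmax al ar xs -> xs <= z <= L ->
  gF L th2 vmax al ar xs z <= - mm L th2 xs * (z - xs).
Proof.
  intros HH Hz. pose proof HH as [HL [Hth [Hxs [Hv [Hal Har]]]]].
  pose proof (fb_right' L th2 vmax al ar xs z HH Hz) as Hb.
  pose proof (vstar_bounds th2 xs Hth (proj1 Hxs)) as Hvs.
  rewrite gF_form by (auto; lra).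
  pose proof (vs_w th2 xs z Hth (proj1 Hxs) (ltac:(lra))) as Hw.
  set (U := feedback L th2 vmax al ar xs z) in *. set (w := th2 * z / (1 + th2 * z)) in *.
  destruct Hxs as [Hx1 Hx2]. destruct Hz as [Hz1 Hz2].
  assert (mm L th2 xs * (z - xs) <= th2 * (z - xs) / ((1 + th2 * xs) * (1 + th2 * z))).
  { replace (mm L th2 xs * (z - xs)) with (th2 * (z - xs) / ((1 + th2 * xs) * (1 + th2 * L))) by (unfold mm; field; split; nra).
    apply div_le2. nra. split. apply Rmult_lt_0_compat; nra. apply Rmult_le_compat_l; nra. }
  assert (th2 * (z - xs) / ((1 + th2 * xs) * (1 + th2 * z)) = - (th2 * (xs - z) / ((1 + th2 * xs) * (1 + th2 * z))))
    by (field; split; nra).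
  assert (0 <= mm L th2 xs * (z - xs)) by (apply Rmult_le_pos; [apply Rlt_le, (mm_pos L th2 vmax al ar xs HH) | lra]).
  apply Rle_trans with (U - w). apply div_le; lra. lra.
Qed.

Definition K2 (L th2 ar xs : R) : R :=
  (th2 + vstar th2 xs * ar / (1 - exp (- ar * (L - xs)))) / (1 - vstar th2 xs).

Lemma K2_pos L th2 vmax al ar xs : Hyp L th2 vmax al ar xs -> 0 < K2 L th2 ar xs.
Proof.
  intros [HL [Hth [Hxs [Hv [Hal Har]]]]]. unfold K2.
  pose proof (vstar_bounds th2 xs Hth (proj1 Hxs)) as Hvs.
  assert (exp (- ar * (L - xs)) < 1). { rewrite <- exp_0. apply exp_increasing. nra. }
  apply Rdiv_lt_0_compat; [|lra]. apply Rplus_lt_le_0_compat; [lra|].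
  apply Rlt_le, Rdiv_lt_0_compat; nra.
Qed.

Lemma B4 L th2 vmax al ar xs z : Hyp L th2 vmax al ar xs -> xs < z <= L ->
  - gF L th2 vmax al ar xs z <= K2 L th2 ar xs * (z - xs).
Proof.
  intros HH Hz. pose proof HH as [HL [Hth [Hxs [Hv [Hal Har]]]]].
  destruct (fb_right L th2 vmax al ar xs z HH Hz) as [_ [Hb Hb2]].
  pose proof (vstar_bounds th2 xs Hth (proj1 Hxs)) as Hvs.
  rewrite gF_form by (auto; lra).
  pose proof (vs_w th2 xs z Hth (proj1 Hxs) (ltac:(lra))) as Hw.
  assert (HE : exp (- ar * (L - xs)) < 1). { rewrite <- exp_0. apply exp_increasing. nra. }
  set (U := feedback L th2 vmax al ar xs z) in *. set (w := th2 * z / (1 + th2 * z)) in *.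
  set (vs := vstar th2 xs) in *. set (E := exp (- ar * (L - xs))) in *.
  destruct Hxs as [Hx1 Hx2]. destruct Hz as [Hz1 Hz2].
  assert (Hvw : th2 * (z - xs) / ((1 + th2 * xs) * (1 + th2 * z)) <= th2 * (z - xs) / 1).
  { apply div_le2. nra. split. lra. assert (0 <= th2 * xs * (1 + th2 * z)) by (apply Rmult_le_pos; nra). nra. }
  unfold Rdiv at 2 in Hvw. rewrite Rinv_1, Rmult_1_r in Hvw.
  assert (th2 * (z - xs) / ((1 + th2 * xs) * (1 + th2 * z)) = - (th2 * (xs - z) / ((1 + th2 * xs) * (1 + th2 * z))))
    by (field; split; nra).
  assert (HEp : 0 < E) by apply exp_pos.
  replace (- ((U - w) / (1 - U))) with ((w - U) / (1 - U)) by (field; lra).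
  apply Rle_trans with ((w - U) / (1 - vs)). apply div_le2. 2: lra.
  { assert (0 <= th2 * (z - xs) / ((1 + th2 * xs) * (1 + th2 * z))).
    { apply Rmult_le_pos. nra. left. apply Rinv_0_lt_compat. apply Rmult_lt_0_compat; nra. }
    lra. }
  unfold K2. fold vs E.
  apply Rle_trans with ((th2 * (z - xs) + vs * ar * (z - xs) / (1 - E)) / (1 - vs)).
  { unfold Rdiv at 1 3. apply Rmult_le_compat_r. left; apply Rinv_0_lt_compat; lra. lra. }
  right. field. lra.
Qed.

Lemma gF_xs L th2 vmax al ar xs : 0 < th2 -> 0 < xs -> gF L th2 vmax al ar xs xs = 0.
Proof.
  intros Hth Hxs. unfold gF. rewrite fb_xs. pose proof (vstar_bounds th2 xs Hth Hxs).
  unfold vstar in *. field. split. nra.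
  intro H'. assert (th2 * xs / (1 + th2 * xs) = 1) by lra. lra.
Qed.

Lemma exd_cont (f : R -> R) x : ex_derive f x -> continuity_pt f x.
Proof. intro H. apply continuity_pt_filterlim. apply (ex_derive_continuous f x H). Qed.

Lemma cont_left L th2 vmax al ar xs z : Hyp L th2 vmax al ar xs -> 0 <= z < xs ->
  continuity_pt (gF L th2 vmax al ar xs) z.
Proof.
  intros HH Hz. pose proof HH as [HL [Hth [Hxs [Hv [Hal Har]]]]].
  destruct (fb_left L th2 vmax al ar xs z HH (ltac:(lra))) as [Hf [Hb _]].
  apply (continuity_pt_ext_loc (fun u => - (th2 * u) / ((1 + th2 * u) * (1 - v_left th2 vmax al xs u)) +
      v_left th2 vmax al xs u / (1 - v_left th2 vmax al xs u))).
  - exists (mkposreal (xs - z) (ltac:(lra))). intros y Hy. unfold gF, feedback.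
    change (Rabs (y - z) < xs - z) in Hy. apply Rabs_def2 in Hy.
    destruct (Rle_dec y xs); [reflexivity | lra].
  - rewrite Hf in Hb. apply exd_cont.
    assert (Hne : 1 - v_left th2 vmax al xs z <> 0) by lra.
    assert (Hne2 : 1 + th2 * z <> 0) by nra.
    unfold v_left, vstar. auto_derive.
    split. apply Rmult_integral_contrapositive_currified. exact Hne2. exact Hne.
    split. exact Hne. exact I.
Qed.

Lemma cont_right L th2 vmax al ar xs z : Hyp L th2 vmax al ar xs -> xs < z <= L ->
  continuity_pt (gF L th2 vmax al ar xs) z.
Proof.
  intros HH Hz. pose proof HH as [HL [Hth [Hxs [Hv [Hal Har]]]]].
  destruct (fb_right L th2 vmax al ar xs z HH Hz) as [Hf [Hb _]].
  pose proof (vstar_bounds th2 xs Hth (proj1 Hxs)) as Hvs.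
  apply (continuity_pt_ext_loc (fun u => - (th2 * u) / ((1 + th2 * u) * (1 - v_right L th2 ar xs u)) +
      v_right L th2 ar xs u / (1 - v_right L th2 ar xs u))).
  - exists (mkposreal (z - xs) (ltac:(lra))). intros y Hy. unfold gF, feedback.
    change (Rabs (y - z) < z - xs) in Hy. apply Rabs_def2 in Hy.
    destruct (Rle_dec y xs); [lra | reflexivity].
  - rewrite Hf in Hb. apply exd_cont.
    assert (Hne : 1 - v_right L th2 ar xs z <> 0) by lra.
    assert (Hne2 : 1 + th2 * z <> 0) by nra.
    unfold v_right, vstar. auto_derive.
    split. apply Rmult_integral_contrapositive_currified. exact Hne2. exact Hne.
    split. exact Hne. exact I.
Qed.

Lemma tau_exists th1 eps om : 0 < th1 -> 0 <= eps < 1 -> 0 <= om ->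
  exists tau : R -> R, tau 0 = 0 /\
    (forall t, derivable_pt_lim tau t (cfun th1 eps om t)) /\
    (forall t, 0 < t -> 0 < tau t).
Proof.
  intros Hth Heps Hom. destruct (Req_dec om 0) as [E|E].
  - exists (fun t => th1 * (1 + eps) * t). split. ring. split.
    + intro t. unfold cfun. rewrite E, Rmult_0_l, cos_0, Rmult_1_r.
      apply is_derive_Reals. auto_derive. auto. ring.
    + intros t Ht. apply Rmult_lt_0_compat; [nra | lra].
  - exists (fun t => th1 * t + th1 * eps * sin (om * t) / om). split.
    cbv beta. rewrite !Rmult_0_r, sin_0. field. auto. split.
    + intro t. unfold cfun. apply is_derive_Reals. auto_derive. auto. field. auto.
    + intros t Ht. assert (Hom' : 0 < om) by lra.
      assert (0 < om * t + eps * sin (om * t)).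
      { destruct (Rlt_le_dec (om * t) PI).
        - assert (0 < sin (om * t)) by (apply sin_gt_0; nra). nra.
        - pose proof (SIN_bound (om * t)). pose proof PI2_1. nra. }
      replace (th1 * t + th1 * eps * sin (om * t) / om) with (th1 * (om * t + eps * sin (om * t)) / om)
        by (field; auto).
      apply Rdiv_lt_0_compat; nra.
Qed.

Lemma cl_eq L th1 th2 eps om vmax al ar xs t z :
  cl_field L th1 th2 eps om vmax al ar xs t z = cfun th1 eps om t * gF L th2 vmax al ar xs z.
Proof. reflexivity. Qed.

Lemma lyap_region L th2 vmax al ar xs : Hyp L th2 vmax al ar xs ->
  exists d0, 0 < d0 /\ forall z, - d0 < z <= L ->
    (z - xs) * gF L th2 vmax al ar xs z <= - mm L th2 xs * ((z - xs) * (z - xs)).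
Proof.
  intros HH. pose proof HH as [HL [Hth [Hxs [Hv [Hal Har]]]]].
  pose proof (mm_pos L th2 vmax al ar xs HH) as Hm.
  set (m := mm L th2 xs) in *.
  set (g := gF L th2 vmax al ar xs).
  assert (Hg0 : m * xs < g 0).
  { destruct (fb_left L th2 vmax al ar xs 0 HH (ltac:(lra))) as [_ [Hb _]].
    unfold g. rewrite gF_form by lra.
    replace (th2 * 0 / (1 + th2 * 0)) with 0 by (unfold Rdiv; ring). rewrite Rminus_0_r.
    assert (fb0 : feedback L th2 vmax al ar xs 0 <= feedback L th2 vmax al ar xs 0 / (1 - feedback L th2 vmax al ar xs 0)).
    { apply div_ge. pose proof (vstar_bounds th2 xs Hth (proj1 Hxs)). lra.
      pose proof (vstar_bounds th2 xs Hth (proj1 Hxs)). lra. }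
    assert (m * xs < vstar th2 xs).
    { unfold m, mm, vstar. destruct Hxs as [Hx1 Hx2].
      replace (th2 / ((1 + th2 * xs) * (1 + th2 * L)) * xs) with ((th2 * xs / (1 + th2 * xs)) / (1 + th2 * L))
        by (field; split; nra).
      assert (0 < th2 * xs / (1 + th2 * xs)) by (apply Rdiv_lt_0_compat; nra).
      set (q := th2 * xs / (1 + th2 * xs)) in *.
      assert (q / (1 + th2 * L) * (1 + th2 * L) = q) by (field; nra).
      assert (0 < q / (1 + th2 * L)) by (apply Rdiv_lt_0_compat; nra).
      assert (0 < q / (1 + th2 * L) * (th2 * L)) by (apply Rmult_lt_0_compat; nra).
      nra. }
    lra. }
  set (ep := (g 0 - m * xs) / 2).
  assert (Hep : 0 < ep) by (unfold ep; lra).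
  pose proof (cont_left L th2 vmax al ar xs 0 HH (ltac:(lra))) as Hc.
  unfold continuity_pt, continue_in, limit1_in, limit_in in Hc.
  destruct (Hc ep Hep) as [dl [Hdl Hdl']].
  set (d0 := Rmin dl (Rmin xs (ep / m))).
  assert (Hd0 : 0 < d0). { unfold d0. apply Rmin_glb_lt. lra. apply Rmin_glb_lt. lra.
    apply Rdiv_lt_0_compat; lra. }
  exists d0. split. exact Hd0.
  intros z Hz. destruct (Rlt_le_dec z 0) as [Hz0|Hz0].
  - assert (Hd0l : d0 <= dl) by apply Rmin_l.
    assert (Hd0x : d0 <= ep / m). { unfold d0. eapply Rle_trans. apply Rmin_r. apply Rmin_r. }
    assert (Hd0xs : d0 <= xs). { unfold d0. eapply Rle_trans. apply Rmin_r. apply Rmin_l. }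
    assert (Hgz : Rabs (g z - g 0) < ep).
    { apply Hdl'. simpl. unfold D_x, no_cond, R_dist. split. split. auto. lra.
      rewrite Rminus_0_r, Rabs_left; lra. }
    apply Rabs_def2 in Hgz.
    assert (m * d0 <= ep). { assert (m * (ep / m) = ep) by (field; lra). nra. }
    assert (0 < m * (d0 + z)) by (apply Rmult_lt_0_compat; lra).
    assert (g 0 = m * xs + 2 * ep) by (unfold ep; field).
    assert (m * (xs - z) <= g z) by nra.
    fold g. nra.
  - destruct (Rle_lt_dec z xs).
    + pose proof (B1 L th2 vmax al ar xs z HH (ltac:(lra))). fold m g in H |- *. nra.
    + pose proof (B3 L th2 vmax al ar xs z HH (ltac:(lra))). fold m g in H |- *. nra.
Qed.

Theorem theorem1
  (L th1 th2 eps om xs vmax S al ar : R)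
  (HL : 0 < L) (Hth1 : 0 < th1) (Hth2 : 0 < th2)
  (Heps : 0 <= eps < 1) (Hom : 0 <= om)
  (Hxs : 0 < xs < L)
  (Hvmax : vstar th2 xs < vmax < 1)
  (HS : S >= Smin L th2 vmax xs)
  (Hal : 0 < al) (Har : 0 < ar)
  (Hal_eq : al * (vmax - vstar th2 xs) - S * (1 - exp (- al * xs)) = 0)
  (Har_eq : ar * vstar th2 xs - S * (1 - exp (- ar * (L - xs))) = 0) :
  exists k lam : R, 0 < k /\ 0 < lam /\
    forall x0 : R, 0 <= x0 < L ->
      (exists x : R -> R, cl_solution L th1 th2 eps om vmax al ar xs x0 x) /\
      (forall x : R -> R, cl_solution L th1 th2 eps om vmax al ar xs x0 x ->
         forall t : R, 0 <= t ->
           0 <= x t <= L /\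
           Rabs (x t - xs) <= k * exp (- lam * t) * Rabs (x0 - xs)).
Proof.
  assert (HH : Hyp L th2 vmax al ar xs) by (repeat split; lra).
  pose proof (mm_pos L th2 vmax al ar xs HH) as Hm.
  set (cmin := th1 * (1 - eps)).
  assert (Hcmin : 0 < cmin) by (unfold cmin; nra).
  assert (Hcm : forall t, cmin <= cfun th1 eps om t).
  { intro t. unfold cfun, cmin. pose proof (COS_bound (om * t)).
    assert (0 <= th1 * (eps * (cos (om * t) + 1))) by (apply Rmult_le_pos; [lra | apply Rmult_le_pos; lra]).
    nra. }
  exists (L / Rmin xs (L - xs)), (mm L th2 xs * cmin).
  assert (Hdm : 0 < Rmin xs (L - xs)) by (apply Rmin_glb_lt; lra).
  split. apply Rdiv_lt_0_compat; lra. split. nra.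
  intros x0 Hx0. split.
  - destruct (tau_exists th1 eps om Hth1 Heps Hom) as [tau [Ht0 [Htd Htp]]].
    assert (Htnn : forall t, 0 <= t -> 0 <= tau t).
    { intros t Ht. destruct (Req_dec t 0). subst. lra. left. apply Htp. lra. }
    assert (Htc : forall d, 0 < d -> exists d', 0 < d' /\ forall t, 0 <= t < d' -> 0 <= tau t < d).
    { intros d Hd. pose proof (cont_of_der _ _ _ (Htd 0)) as Hc.
      unfold continuity_pt, continue_in, limit1_in, limit_in in Hc.
      destruct (Hc d Hd) as [d' [Hd' Hd'']]. exists d'. split. auto. intros t Ht.
      split. apply Htnn, Ht. destruct (Req_dec t 0). subst. lra.
      assert (Rabs (tau t - tau 0) < d).
      { apply Hd''. simpl. unfold D_x, no_cond, R_dist. split. split. auto. auto.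
        rewrite Rminus_0_r, Rabs_right; lra. }
      rewrite Ht0, Rminus_0_r in H0. apply Rabs_def2 in H0. lra. }
    destruct (Rtotal_order x0 xs) as [Hlt|[Heq|Hgt]].
    + destruct (exist_incr (gF L th2 vmax al ar xs) x0 xs (K1 th2 vmax al xs)) as [y [Hy0 [Hyc [Hyd Hyr]]]].
      * lra.
      * apply (K1_pos L th2 vmax al ar xs HH).
      * intros z Hz. apply cont_left; auto. lra.
      * intros z Hz. pose proof (B1 L th2 vmax al ar xs z HH (ltac:(lra))). nra.
      * intros z Hz. apply B2; auto. lra.
      * exists (fun t => y (tau t)). split; [|split].
        -- rewrite Ht0. exact Hy0.
        -- intros e He. destruct (Hyc e He) as [d [Hd Hd']].
           destruct (Htc d Hd) as [d' [Hd1 Hd2]]. exists d'. split. auto.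
           intros t Ht. apply Hd', Hd2, Ht.
        -- intros t Ht. rewrite cl_eq. rewrite Rmult_comm.
           apply (derivable_pt_lim_comp tau y t). apply Htd. apply Hyd, Htp, Ht.
    + exists (fun _ => xs). split; [|split].
      * auto.
      * intros e He. exists 1. split. lra. intros t Ht. rewrite Heq, Rminus_diag, Rabs_R0. auto.
      * intros t Ht. rewrite cl_eq, gF_xs by lra. rewrite Rmult_0_r. apply derivable_pt_lim_const.
    + destruct (exist_incr (fun z => - gF L th2 vmax al ar xs (- z)) (- x0) (- xs) (K2 L th2 ar xs))
        as [y [Hy0 [Hyc [Hyd Hyr]]]].
      * lra.
      * apply (K2_pos L th2 vmax al ar xs HH).
      * intros z Hz. apply continuity_pt_opp.
        apply (continuity_pt_comp (fun z => - z) (gF L th2 vmax al ar xs)).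
        apply continuity_pt_opp, derivable_continuous_pt, derivable_pt_id.
        apply cont_right; auto. lra.
      * intros z Hz. pose proof (B3 L th2 vmax al ar xs (- z) HH (ltac:(lra))). nra.
      * intros z Hz. replace (- xs - z) with (- z - xs) by ring. apply B4; auto. lra.
      * exists (fun t => - y (tau t)). split; [|split].
        -- cbv beta. rewrite Ht0, Hy0. ring.
        -- intros e He. destruct (Hyc e He) as [d [Hd Hd']].
           destruct (Htc d Hd) as [d' [Hd1 Hd2]]. exists d'. split. auto.
           intros t Ht. specialize (Hd' _ (Hd2 t Ht)).
           replace (- y (tau t) - x0) with (- (y (tau t) - - x0)) by ring.
           rewrite Rabs_Ropp. exact Hd'.
        -- intros t Ht. rewrite cl_eq.
           replace (cfun th1 eps om t * gF L th2 vmax al ar xs (- y (tau t)))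
             with (- ((- gF L th2 vmax al ar xs (- y (tau t))) * cfun th1 eps om t)) by ring.
           apply (derivable_pt_lim_opp (fun t => y (tau t))).
           apply (derivable_pt_lim_comp tau y t). apply Htd. apply (Hyd (tau t)), Htp, Ht.
  - destruct (lyap_region L th2 vmax al ar xs HH) as [d0 [Hd0 Hly]].
    intros x [Hx0' [Hrc Hder]].
    apply (stab_abstract (cfun th1 eps om) (gF L th2 vmax al ar xs) x x0 xs L (mm L th2 xs) cmin d0);
      auto.
Qed.
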